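(* Let $C_1$ and $C_2$ be subsets of a topological real vector space such that $\mathrm{ri}(C_1)\subseteq C_2\subseteq\mathrm{rc}(C_1)$. If $C_1$ is strictly convex, then $C_2$ is strictly convex.
   Context: Topological real vector spaces are not assumed Hausdorff. For a subset $S$, $\mathrm{Aff}(S)$ is its affine hull; $\mathrm{ri}(S)$, $\mathrm{rc}(S)$ are the interior and closure of $S$ in the subspace topology of $\mathrm{Aff}(S)$. $]x,y[=\{(1-t)x+ty: t\in[0,1]\}\setminus\{x,y\}$. A set $C$ is strictly convex if for any two distinct $x,y\in\mathrm{rc}(C)$, $]x,y[\subseteq\mathrm{ri}(C)$. *)

(* Defs.v *)
From HB Require Import structures.
From mathcomp Require Import all_boot all_order all_algebra.
From mathcomp Require Import all_classical all_reals all_analysis.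
Set Implicit Arguments. Unset Strict Implicit. Unset Printing Implicit Defensive.
Import Order.TTheory GRing.Theory Num.Theory.
Local Open Scope classical_set_scope.
Local Open Scope ring_scope.

(* E : a topological real vector space (topologicalLmodType over a realType);
   no Hausdorff (separation) assumption is made. *)

Definition Aff (R : realType) (E : topologicalLmodType R) (S : set E) : set E :=
  [set x | exists (n : nat) (w : 'I_n -> R) (p : 'I_n -> E),
     (forall i, S (p i)) /\ \sum_(i < n) w i = 1 /\ x = \sum_(i < n) w i *: p i].

(* Relative interior: interior of S in the subspace topology of Aff S. *)
Definition ri (R : realType) (E : topologicalLmodType R) (S : set E) : set E :=
  [set x | Aff S x /\ exists U : set E, open U /\ U x /\ U `&` Aff S `<=` S].

(* Relative closure: closure of S in the subspace topology of Aff S. *)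
Definition rc (R : realType) (E : topologicalLmodType R) (S : set E) : set E :=
  [set x | Aff S x /\ forall U : set E, open U -> U x -> (U `&` Aff S) `&` S !=set0].

Definition oseg (R : realType) (E : topologicalLmodType R) (x y : E) : set E :=
  [set z | (exists t : R, 0 <= t <= 1 /\ z = (1 - t) *: x + t *: y) /\ z <> x /\ z <> y].

Definition strictly_convex (R : realType) (E : topologicalLmodType R) (C : set E) : Prop :=
  forall x y : E, rc C x -> rc C y -> x <> y -> oseg x y `<=` ri C.

(* Main.v *)
Require Import Defs.
From mathcomp Require Import all_boot all_order all_algebra.
From mathcomp Require Import all_classical all_reals all_analysis.
Local Open Scope classical_set_scope.

Import GRing.Theory.

Section Aux.
Local Open Scope ring_scope.
Variables (R : realType) (E : topologicalLmodType R) (S : set E).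

Definition Lc (c : R) (x : E) := exists (n : nat) (w : 'I_n -> R) (p : 'I_n -> E),
     (forall i, S (p i)) /\ \sum_(i < n) w i = c /\ x = \sum_(i < n) w i *: p i.

Lemma Lc_add c d a b : Lc c a -> Lc d b -> Lc (c + d) (a + b).
Proof.
move=> [n [w [p [Sp [sw ->]]]]] [m [w' [p' [Sp' [sw' ->]]]]].
exists (n + m)%N.
exists (fun k : 'I_(n + m) => match fintype.split k with inl i => w i | inr j => w' j end).
exists (fun k : 'I_(n + m) => match fintype.split k with inl i => p i | inr j => p' j end).
split; [move=> k; case: (fintype.split k) => //|].
have hl : forall i : 'I_n, fintype.split (lshift m i) = inl i by move=> i; exact: (unsplitK (inl _ i)).
have hr : forall i : 'I_m, fintype.split (rshift n i) = inr i by move=> i; exact: (unsplitK (inr _ i)).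
rewrite !big_split_ord /=; split.
  by rewrite -sw -sw'; congr (_ + _); apply: eq_bigr => i _; rewrite ?hl ?hr.
by congr (_ + _); apply: eq_bigr => i _; rewrite ?hl ?hr.
Qed.

Lemma Lc_scale k c a : Lc c a -> Lc (k * c) (k *: a).
Proof.
move=> [n [w [p [Sp [sw ->]]]]].
exists n, (fun i => k * w i), p; split => //; split.
  by rewrite -mulr_sumr sw.
by rewrite scaler_sumr; apply: eq_bigr => i _; rewrite scalerA.
Qed.

Lemma Lc_comb n (w : 'I_n -> R) (p : 'I_n -> E) :
  (forall i, Aff S (p i)) -> Lc (\sum_(i < n) w i) (\sum_(i < n) w i *: p i).
Proof.
elim: n w p => [|n IH] w p Ap.
  rewrite !big_ord0; exists 0%N, w, p; split; [by case|by rewrite !big_ord0].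
rewrite !big_ord_recr /=; apply: Lc_add; first by apply: IH.
have := @Lc_scale (w ord_max) 1 _ (Ap ord_max); by rewrite mulr1.
Qed.

Lemma Aff_sub (A : set E) : A `<=` Aff S -> Aff A `<=` Aff S.
Proof.
move=> AS x [n [w [p [Ap [sw ->]]]]].
have := @Lc_comb n w p (fun i => AS _ (Ap i)); by rewrite sw.
Qed.

Lemma sub_Aff : S `<=` Aff S.
Proof.
move=> x Sx; exists 1%N, (fun _ => 1), (fun _ => x); split => //.
by rewrite !big_ord1 scale1r.
Qed.

End Aux.

Theorem mainTheorem13 (R : realType) (E : topologicalLmodType R) (C1 C2 : set E) :
  ri C1 `<=` C2 -> C2 `<=` rc C1 -> strictly_convex C1 -> strictly_convex C2.
Proof.
move=> h1 h2 sc.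
have A21 : Aff C2 `<=` Aff C1 by apply: Aff_sub => x /h2 [].
have rc21 : rc C2 `<=` rc C1.
  move=> x [Ax hx]; split; first exact: A21.
  move=> U oU Ux; have [z [[Uz _] C2z]] := hx U oU Ux.
  have [_ hz] := h2 z C2z; exact: hz.
have ri12 : ri C1 `<=` ri C2.
  move=> x rx; have [Ax [U [oU [Ux sU]]]] := rx.
  split; first by apply: sub_Aff; exact: h1.
  exists U; split => //; split => //.
  move=> z [Uz Az]; apply: h1; split; first exact: A21.
  exists U; split => //; split => //.
move=> x y /rc21 rx /rc21 ry xy z /(sc x y rx ry xy); exact: ri12.
Qed.
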